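(* Let $\alpha\in(1,2)$ and let $K\ge3$ be an integer. Then \[ \sigma_{\alpha,K}:=\left(\frac{\left(1-\frac1K\right)^{\frac{1-\alpha}{3-\alpha}}+\left(1+\frac1K\right)^{\frac{1-\alpha}{3-\alpha}}}{2}\right)^{3-\alpha} \] satisfies \[ 1+\frac{\alpha-1}{3-\alpha}\cdot\frac1{K^2}\ \le\ \sigma_{\alpha,K}\ \le\ 1+\frac{7(\alpha-1)}{6(3-\alpha)}\cdot\frac1{K^2}. \] *)

(* Defs.v *)
From Stdlib Require Import Reals.
Open Scope R_scope.

Definition sigma_aK (a : R) (K : nat) : R :=
  let e := (1 - a) / (3 - a) in
  Rpower ((Rpower (1 - 1 / INR K) e + Rpower (1 + 1 / INR K) e) / 2) (3 - a).

(* Main.v *)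
Require Import Defs.
From Stdlib Require Import Reals Lra Psatz.
From Coquelicot Require Import Coquelicot.
Open Scope R_scope.
Lemma incr_tool (f g : R -> R) a b : a <= b ->
  (forall c, a <= c <= b -> is_derive f c (g c)) ->
  (forall c, a <= c <= b -> 0 <= g c) -> f a <= f b.
Proof.
  intros Hab Hd Hg. destruct (Req_dec a b) as [->|Hne]; [lra|].
  destruct (MVT_cor2 f g a b) as [c [Hc1 Hc2]]; [lra| |].
  - intros c Hc. apply is_derive_Reals. apply Hd; exact Hc.
  - assert (0 <= g c) by (apply Hg; lra). nra.
Qed.

Lemma exp_sum_ge2 y : 2 <= exp y + exp (- y).
Proof.
  rewrite exp_Ropp. assert (H := exp_pos y). set (E := exp y) in *.
  assert (E + / E - 2 = (E - 1)^2 / E) by (field; repeat split; intro; nra).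
  assert (0 <= (E-1)^2 / E) by (apply Rdiv_le_0_compat; [apply pow2_ge_0|lra]).
  lra.
Qed.

Lemma sinh_ge y : 0 <= y -> 2 * y <= exp y - exp (- y).
Proof.
  intros Hy.
  assert (H := incr_tool (fun y => exp y - exp (- y) - 2 * y)
                (fun y => exp y + exp (- y) - 2) 0 y Hy).
  simpl in H. rewrite Ropp_0, exp_0 in H.
  assert (0 <= exp y - exp (- y) - 2 * y); [|lra].
  replace 0 with (1 - 1 - 2 * 0) at 1 by ring. apply H.
  - intros c _. auto_derive; auto. ring.
  - intros c _. pose proof (exp_sum_ge2 c). lra.
Qed.

Lemma cosh_lb y : 0 <= y -> 2 + y ^ 2 <= exp y + exp (- y).
Proof.
  intros Hy.
  assert (H := incr_tool (fun y => exp y + exp (- y) - y ^ 2)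
                (fun y => exp y - exp (- y) - 2 * y) 0 y Hy).
  simpl in H. rewrite Ropp_0, exp_0 in H.
  assert (1 + 1 - 0 * (0 * 1) <= exp y + exp (- y) - y * (y * 1)); [|lra].
  apply H.
  - intros c _. auto_derive; auto. ring.
  - intros c Hc. pose proof (sinh_ge c). lra.
Qed.

Lemma artanh_lb x : 0 <= x < 1 -> 2 * x <= ln (1 + x) - ln (1 - x).
Proof.
  intros Hx.
  assert (H := incr_tool (fun x => ln (1 + x) - ln (1 - x) - 2 * x)
                (fun x => / (1 + x) + / (1 - x) - 2) 0 x (proj1 Hx)).
  simpl in H. rewrite !Rplus_0_r, Rminus_0_r, ln_1 in H.
  assert (0 - 0 - 2 * 0 <= ln (1 + x) - ln (1 - x) - 2 * x); [|lra].
  apply H.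
  - intros c Hc. auto_derive; [lra|]. field; repeat split; intro; nra.
  - intros c Hc. assert (/ (1 + c) + / (1 - c) - 2 = 2 * c^2 / ((1+c)*(1-c))) by (field; repeat split; intro; nra).
    rewrite H0. apply Rdiv_le_0_compat; [pose proof (pow2_ge_0 c); lra|nra].
Qed.

Lemma cosh_mono p q : 0 <= p <= q -> exp p + exp (- p) <= exp q + exp (- q).
Proof.
  intros Hpq. rewrite !exp_Ropp.
  assert (1 <= exp p) by (rewrite <- exp_0; destruct (Req_dec p 0) as [->|]; [lra|left; apply exp_increasing; lra]).
  assert (exp p <= exp q) by (destruct (Req_dec p q) as [->|]; [lra|left; apply exp_increasing; lra]).
  set (P := exp p) in *. set (Q := exp q) in *.
  assert (Q + / Q - (P + / P) = (Q - P) * (P * Q - 1) / (P * Q)) by (field; repeat split; intro; nra).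
  assert (1 <= P * Q) by nra.
  assert (0 <= (Q - P) * (P * Q - 1) / (P * Q)) by (apply Rdiv_le_0_compat; [apply Rmult_le_pos; lra|nra]).
  lra.
Qed.

Lemma sinh_conv t z : 0 <= t <= 1 -> 0 <= z ->
  exp (t * z) - exp (- (t * z)) <= t * (exp z - exp (- z)).
Proof.
  intros Ht Hz.
  assert (H := incr_tool (fun z => t * (exp z - exp (- z)) - (exp (t * z) - exp (- (t * z))))
                (fun z => t * (exp z + exp (- z)) - t * (exp (t * z) + exp (- (t * z)))) 0 z Hz).
  simpl in H. rewrite Rmult_0_r, Ropp_0, exp_0 in H.
  assert (t * (1 - 1) - (1 - 1) <= t * (exp z - exp (- z)) - (exp (t * z) - exp (- (t * z)))); [|lra].
  apply H.
  - intros c _. auto_derive; auto. ring.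
  - intros c Hc. pose proof (cosh_mono (t * c) c). assert (0 <= t*c <= c) by nra. nra.
Qed.

Lemma conc w s : 0 < w -> 0 <= s <= 1 -> exp (s * ln w) <= 1 + s * (w - 1).
Proof.
  intros Hw Hs. rewrite <- (exp_ln w) at 2 by lra.
  set (a := ln w). set (c := s * a).
  assert (H1 : exp a = exp c * exp (a - c)) by (rewrite <- exp_plus; f_equal; ring).
  assert (H2 := exp_ineq1_le (a - c)).
  assert (H3 : 1 = exp c * exp (- c)) by (rewrite <- exp_plus; replace (c + - c) with 0 by ring; now rewrite exp_0).
  assert (H4 := exp_ineq1_le (- c)).
  assert (Ec := exp_pos c).
  assert (s * exp c * (1 + (a - c)) <= s * exp c * exp (a - c)).
  { apply Rmult_le_compat_l; [apply Rmult_le_pos; lra|lra]. }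
  assert ((1 - s) * exp c * (1 + - c) <= (1 - s) * exp c * exp (- c)).
  { apply Rmult_le_compat_l; [apply Rmult_le_pos; lra|lra]. }
  assert (s * exp a + (1 - s) = s * exp c * exp (a - c) + (1 - s) * exp c * exp (- c)).
  { rewrite H1. rewrite (Rmult_assoc (1 - s)), <- H3. ring. }
  assert (s * exp c * (1 + (a - c)) + (1 - s) * exp c * (1 + - c) = exp c) by (unfold c; ring).
  lra.
Qed.

Lemma bern v r : 0 < v -> 1 <= r -> 1 + r * (v - 1) <= Rpower v r.
Proof.
  intros Hv Hr. set (W := Rpower v r).
  assert (HW : 0 < W) by (unfold W, Rpower; apply exp_pos).
  assert (Hv' : Rpower W (1 / r) = v).
  { unfold W. rewrite Rpower_mult. replace (r * (1 / r)) with 1 by (field; lra). apply Rpower_1; lra. }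
  assert (H := conc W (1 / r) HW).
  assert (0 <= 1 / r <= 1).
  { split. apply Rlt_le, Rdiv_lt_0_compat; lra.
    unfold Rdiv. rewrite Rmult_1_l. rewrite <- Rinv_1. apply Rinv_le_contravar; lra. }
  specialize (H H0). unfold Rpower in Hv'. rewrite Hv' in H.
  assert (r * v <= r * (1 + 1 / r * (W - 1))) by (apply Rmult_le_compat_l; lra).
  replace (r * (1 + 1 / r * (W - 1))) with (r + (W - 1)) in H1 by (field; lra).
  lra.
Qed.

Lemma pow_up M s : 1 <= M -> 0 <= s <= 1 -> Rpower M (1 + s) <= M * (1 + s * (M - 1)).
Proof.
  intros HM Hs. rewrite Rpower_plus, Rpower_1 by lra.
  apply Rmult_le_compat_l; [lra|]. unfold Rpower. apply conc; lra.
Qed.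

Lemma final_alg t X e : 0 < t < 1 -> 0 < X <= 1/9 -> 0 <= e <= 9 * X / 16 ->
  let ub := t * e + t^2 * e + t^3 * e^2 in
  (1 + ub) * (1 + (1 - t) / (1 + t) * ub) <= 1 + 7 * t / 6 * X.
Proof.
  intros Ht HX He ub.
  set (q := (9/16)*(1+t) + (81/256)*t^2*X).
  set (qb := (9/16)*(1+t) + 9/256).
  assert (Hq : 0 <= q <= qb).
  { unfold q, qb. split. assert (0 <= t^2*X) by (apply Rmult_le_pos; nra). nra.
    assert (t^2 * X <= 1/9) by (assert (t^2 <= 1) by nra; nra). nra. }
  assert (Hub0 : 0 <= ub) by (unfold ub; assert (0 <= t^2*e) by (apply Rmult_le_pos; nra);
     assert (0 <= t^3*e^2) by (apply Rmult_le_pos; [nra| apply pow2_ge_0]); nra).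
  assert (Hub : ub <= t * X * q).
  { unfold ub, q. assert (e^2 <= (9*X/16)^2) by (apply pow_incr; lra).
    assert (t^3 * e^2 <= t^3 * (9*X/16)^2) by (apply Rmult_le_compat_l; [nra|lra]).
    assert (t*e*(1+t) <= t*(9*X/16)*(1+t)) by (apply Rmult_le_compat_r; [lra|nra]). nra. }
  assert (Hpoly : (9/128)*t^2 + (1-t)*t*qb^2/9 <= (1+t)/24).
  { assert (0 <= (1-t)*t) by nra.
    assert (0 <= (1-t)*t*t) by nra.
    assert (0 <= (1-t)*t*t*t) by nra. unfold qb. nra. }
  assert (Hkey : 2 * q + (1 - t) * t * X * q^2 <= 7 * (1 + t) / 6).
  { assert (q^2 <= qb^2) by (apply pow_incr; lra).
    assert (0 <= (1-t)*t) by nra.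
    assert ((1 - t) * t * X * q^2 <= (1-t)*t*qb^2/9).
    { assert ((1-t)*t*X <= (1-t)*t/9) by (apply Rmult_le_compat_l; lra).
      assert (0 <= q^2) by apply pow2_ge_0.
      assert ((1 - t) * t * X * q^2 <= (1-t)*t/9 * q^2) by (apply Rmult_le_compat_r; lra).
      assert ((1-t)*t/9 * q^2 <= (1-t)*t/9 * qb^2) by (apply Rmult_le_compat_l; lra).
      lra. }
    assert (2 * q <= (9/8)*(1+t) + (9/128)*t^2).
    { unfold q. assert (t^2 * X <= t^2 / 9) by (apply Rmult_le_compat_l; [nra|lra]). lra. }
    lra. }
  assert (Hgoal : 2 * ub + (1 - t) * ub^2 <= 7 * t * X * (1 + t) / 6).
  { assert (ub^2 <= (t*X*q)^2) by (apply pow_incr; lra).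
    assert ((1-t)*ub^2 <= (1-t)*(t*X*q)^2) by (apply Rmult_le_compat_l; lra).
    assert ((1-t)*(t*X*q)^2 = t * X * ((1 - t) * t * X * q^2)) by ring.
    assert (t * X * (2 * q + (1 - t) * t * X * q^2) <= t * X * (7 * (1 + t) / 6))
      by (apply Rmult_le_compat_l; [nra|lra]).
    nra. }
  assert (E : (1 + ub) * (1 + (1 - t) / (1 + t) * ub) =
              1 + (2 * ub + (1 - t) * ub^2) / (1 + t)) by (field; lra).
  rewrite E.
  assert ((2 * ub + (1 - t) * ub^2) / (1 + t) <= 7 * t / 6 * X); [|lra].
  apply (Rmult_le_reg_r (1 + t)); [lra|].
  replace ((2 * ub + (1 - t) * ub^2) / (1 + t) * (1 + t)) with (2 * ub + (1 - t) * ub^2) by (field; lra).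
  lra.
Qed.

Lemma core t x : 0 < t < 1 -> 0 < x <= 1/3 ->
  let M := (exp (- t * ln (1 - x)) + exp (- t * ln (1 + x))) / 2 in
  1 + t * x^2 <= Rpower M (2 / (1 + t)) /\ Rpower M (2 / (1 + t)) <= 1 + 7 * t / 6 * x^2.
Proof.
  intros Ht Hx M.
  set (A := ln (1 - x)). set (B := ln (1 + x)).
  set (m := - (A + B) / 2). set (d := (B - A) / 2).
  assert (Hd : x <= d) by (pose proof (artanh_lb x); unfold d, A, B; lra).
  assert (HAB : A + B = ln (1 - x^2)).
  { unfold A, B. rewrite <- ln_mult by lra. f_equal. ring. }
  assert (Hx2 : 0 < x^2 <= 1/9) by (split; nra).
  assert (Hln : ln (1 - x^2) <= - x^2).
  { pose proof (exp_ineq1_le (ln (1 - x^2))). rewrite exp_ln in H by lra. lra. }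
  assert (Hm : x^2 / 2 <= m) by (unfold m; lra).
  assert (HM : M = exp (t * m) * (exp (t * d) + exp (- (t * d))) / 2).
  { unfold M. rewrite Rmult_plus_distr_l, <- !exp_plus.
    replace (t * m + t * d) with (- t * A) by (unfold m, d; field).
    replace (t * m + - (t * d)) with (- t * B) by (unfold m, d; field).
    reflexivity. }
  assert (Em := exp_pos (t * m)).
  assert (Hlow1 : 1 + t * x^2 / 2 <= exp (t * m)).
  { pose proof (exp_ineq1_le (t * m)). assert (t * (x^2/2) <= t * m) by (apply Rmult_le_compat_l; lra). lra. }
  assert (Hlow2 : 2 + t^2 * x^2 <= exp (t * d) + exp (- (t * d))).
  { pose proof (cosh_lb (t * d)). assert (0 <= t * x <= t * d) by (split; nra).
    assert ((t*x)^2 <= (t*d)^2) by (apply pow_incr; lra). 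
    assert (0 <= t * d) by lra. specialize (H H2). nra. }
  assert (HMlow : 1 + t * (1 + t) * x^2 / 2 <= M).
  { rewrite HM.
    assert ((1 + t * x^2 / 2) * (2 + t^2 * x^2) <= exp (t * m) * (exp (t * d) + exp (- (t * d)))).
    { apply Rmult_le_compat; try lra. nra. nra. }
    assert (0 <= t * x^2 / 2 * (t^2 * x^2)) by (apply Rmult_le_pos; nra).
    nra. }
  assert (Hr : 1 <= 2 / (1 + t)).
  { apply (Rmult_le_reg_r (1 + t)); [lra|]. unfold Rdiv. rewrite Rmult_assoc, Rinv_l by lra. lra. }
  split.
  { assert (HM0 : 0 < M) by nra.
    pose proof (bern M (2 / (1 + t)) HM0 Hr).
    assert (2 / (1 + t) * (t * (1 + t) * x^2 / 2) <= 2 / (1 + t) * (M - 1)) by (apply Rmult_le_compat_l; lra).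
    replace (2 / (1 + t) * (t * (1 + t) * x^2 / 2)) with (t * x^2) in H0 by (field; lra).
    lra. }
  set (w := exp m).
  assert (Hw1 : 1 <= w).
  { unfold w. rewrite <- exp_0. destruct (Req_dec m 0) as [->|]; [lra|left; apply exp_increasing; nra]. }
  assert (Hw2 : w^2 * (1 - x^2) = 1).
  { unfold w. replace (exp m ^ 2) with (exp (2 * m)) by (replace (exp m ^ 2) with (exp m * exp m) by ring; rewrite <- exp_plus; f_equal; ring).
    replace (2 * m) with (- ln (1 - x^2)) by (unfold m; lra).
    rewrite exp_Ropp, exp_ln by lra. field. lra. }
  assert (HEA : exp (- A) = / (1 - x)) by (rewrite exp_Ropp; unfold A; rewrite exp_ln; lra).
  assert (HEB : exp (- B) = / (1 + x)) by (rewrite exp_Ropp; unfold B; rewrite exp_ln; lra).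
  assert (HC : exp d + exp (- d) = 2 * w).
  { replace d with (- A + - m) by (unfold d, m; field).
    replace (- (- A + - m)) with (- B + - m) by (unfold m; field).
    rewrite !exp_plus, HEA, HEB, exp_Ropp. fold w.
    assert (0 < w) by lra.
    apply (Rmult_eq_reg_r (w * (1 - x^2))); [|nra].
    field_simplify. 2: (repeat split; intro; nra).
    replace ((-2 * x ^ 2 + 2) / (- x ^ 2 + 1)) with 2 by (field; intro; nra).
    replace (-2*x^2*w^2 + 2*w^2) with (2*(w^2*(1-x^2))) by ring. rewrite Hw2; ring. }
  assert (Hup1 : exp (t * m) <= 1 + t * (w - 1)).
  { replace m with (ln w) by (unfold w; apply ln_exp). apply conc; lra. }
  assert (Hup2 : exp (t * d) + exp (- (t * d)) <= 2 + t^2 * (2 * w - 2)).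
  { assert (Hd0 : 0 <= d / 2) by lra.
    pose proof (sinh_conv t (d/2) (conj (Rlt_le _ _ (proj1 Ht)) (Rlt_le _ _ (proj2 Ht))) Hd0) as Hs.
    assert (Hs0 : 0 <= exp (t * (d/2)) - exp (- (t * (d/2)))).
    { assert (exp (- (t * (d/2))) <= exp (t * (d/2))); [|lra].
      destruct (Req_dec d 0) as [->|]; [ right; f_equal; lra | left; apply exp_increasing; nra]. }
    assert (Hsq : (exp (t * (d/2)) - exp (- (t * (d/2))))^2 <= (t * (exp (d/2) - exp (- (d/2))))^2)
      by (apply pow_incr; lra).
    assert (Hid : forall z, (exp z - exp (- z))^2 = exp (2 * z) + exp (- (2 * z)) - 2).
    { intros z. simpl. rewrite Rmult_1_r.
      replace (exp (2 * z)) with (exp z * exp z) by (rewrite <- exp_plus; f_equal; ring).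
      replace (exp (- (2 * z))) with (exp (- z) * exp (- z)) by (rewrite <- exp_plus; f_equal; ring).
      assert (exp z * exp (- z) = 1) by (rewrite <- exp_plus; replace (z + - z) with 0 by ring; apply exp_0).
      nra. }
    rewrite Hid in Hsq. replace ((t * (exp (d / 2) - exp (- (d / 2)))) ^ 2) with
      (t^2 * (exp (d / 2) - exp (- (d / 2))) ^ 2) in Hsq by ring.
    rewrite Hid in Hsq. replace (2 * (t * (d/2))) with (t * d) in Hsq by field.
    replace (2 * (d/2)) with d in Hsq by field. rewrite HC in Hsq. lra. }
  assert (HMup : M <= (1 + t * (w - 1)) * (1 + t^2 * (w - 1))).
  { rewrite HM. 
    assert (exp (t * m) * (exp (t * d) + exp (- (t * d))) <= (1 + t * (w - 1)) * (2 + t^2 * (2 * w - 2))).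
    { apply Rmult_le_compat; try lra. pose proof (exp_pos (t*d)); pose proof (exp_pos (- (t*d))); lra. }
    lra. }
  set (s := (1 - t) / (1 + t)).
  assert (Hs : 0 <= s <= 1).
  { unfold s. split. apply Rdiv_le_0_compat; lra.
    apply (Rmult_le_reg_r (1 + t)); [lra|]. unfold Rdiv. rewrite Rmult_assoc, Rinv_l by lra. lra. }
  replace (2 / (1 + t)) with (1 + s) by (unfold s; field; lra).
  assert (HM1 : 1 <= M) by nra.
  pose proof (pow_up M s HM1 Hs) as Hpu.
  set (e := w - 1).
  assert (He : 0 <= e <= 9 * x^2 / 16).
  { unfold e. split; [lra|].
    assert ((w - 1) * (w + 1) = x^2 * w^2) by nra.
    assert (w^2 <= 9/8).
    { assert (w^2 * (1 - x^2) * 9 / 8 >= w^2) by nra. lra. }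
    assert (x^2 * w^2 <= x^2 * (9/8)) by (apply Rmult_le_compat_l; lra).
    nra. }
  pose proof (final_alg t (x^2) e Ht Hx2 He) as Hf. cbv zeta in Hf. fold s in Hf.
  set (ub := t * e + t^2 * e + t^3 * e^2) in *.
  assert (HMub : M - 1 <= ub).
  { unfold ub. fold e in HMup. replace ((1 + t * e) * (1 + t^2 * e)) with (1 + (t * e + t^2 * e + t^3 * e^2)) in HMup by ring. lra. }
  assert (M * (1 + s * (M - 1)) <= (1 + ub) * (1 + s * ub)).
  { apply Rmult_le_compat; try lra. assert (0 <= s * (M - 1)) by (apply Rmult_le_pos; lra). lra.
    assert (s * (M - 1) <= s * ub) by (apply Rmult_le_compat_l; lra). lra. }
  lra.
Qed.

Theorem proposition2 (a : R) (K : nat) :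
  1 < a < 2 -> (3 <= K)%nat ->
  1 + (a - 1) / (3 - a) * (1 / (INR K)^2) <= sigma_aK a K /\
  sigma_aK a K <= 1 + 7 * (a - 1) / (6 * (3 - a)) * (1 / (INR K)^2).
Proof.
  intros Ha HK.
  assert (HK3 : 3 <= INR K) by (replace 3 with (INR 3) by (simpl; ring); apply le_INR; exact HK).
  set (x := 1 / INR K).
  assert (Hx : 0 < x <= 1/3).
  { unfold x. split. apply Rdiv_lt_0_compat; lra.
    apply (Rmult_le_reg_r (INR K)); [lra|]. unfold Rdiv. rewrite Rmult_assoc, Rinv_l by lra. lra. }
  set (t := (a - 1) / (3 - a)).
  assert (Ht : 0 < t < 1).
  { unfold t. split. apply Rdiv_lt_0_compat; lra.
    apply (Rmult_lt_reg_r (3 - a)); [lra|]. unfold Rdiv. rewrite Rmult_assoc, Rinv_l by lra. lra. }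
  pose proof (core t x Ht Hx) as Hc. cbv zeta in Hc.
  assert (E1 : (1 - a) / (3 - a) = - t) by (unfold t; field; intro; lra).
  assert (E2 : 3 - a = 2 / (1 + t)) by (unfold t; field; split; intro; lra).
  assert (E3 : 1 / INR K ^ 2 = x ^ 2) by (unfold x; field; intro; lra).
  unfold sigma_aK. cbv zeta. rewrite E1. fold x. unfold Rpower at 2 3.
  rewrite <- E2 in Hc.
  rewrite E3.
  replace (7 * (a - 1) / (6 * (3 - a))) with (7 * t / 6) by (unfold t; field; intro; lra).
  fold t. exact Hc.
Qed.
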